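(* Let $\kappa<\Gamma$ be infinite cardinals. Then the Banach space $X_0^{\kappa,\Gamma}=\{f\in\ell_\infty(\Gamma):\exists A\subseteq\Gamma,\ |A|=\kappa,\ f|_{\Gamma\setminus A}\equiv 0\}$ (with the sup norm) fails the ball fixed point property.
   Context: $\ell_\infty(\Gamma)$ is the Banach space of bounded functions $\Gamma\to\mathbb{R}$ with the sup norm, where the cardinal $\Gamma$ is identified with the set of ordinals below it. A real Banach space $X$ has the ball fixed point property (BFPP) if every nonexpansive map $T\colon B_X\to B_X$ (i.e. $\|Tx-Ty\|\le\|x-y\|$) has a fixed point, where $B_X$ is the closed unit ball. *)

(* Defs.v *)
From HB Require Import structures.
From mathcomp Require Import all_boot all_order all_algebra.
From mathcomp Require Import all_classical all_reals.
From mathcomp Require Import Rstruct.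
From Stdlib Require Import Rdefinitions.
Notation R := Rdefinitions.R.
Import Order.TTheory GRing.Theory Num.Theory.
Local Open Scope classical_set_scope.
Local Open Scope ring_scope.

(* Real-valued functions on an index type G (the cardinal Gamma, viewed as a
   type whose cardinality is Gamma), over Stdlib's reals R (a realType). *)

Definition bounded_fun {G : Type} (f : G -> R) : Prop :=
  exists M : R, forall g, `|f g| <= M.

Definition supnorm {G : Type} (f : G -> R) : R :=
  sup [set `|f g| | g in [set: G]].

Definition X0 (K G : Type) : set (G -> R) :=
  [set f | bounded_fun f /\
           exists A : set G, (A #= [set: K])%card /\ forall g, ~ A g -> f g = 0].

Definition unit_ball {G : Type} (X : set (G -> R)) : set (G -> R) :=
  [set f | X f /\ supnorm f <= 1].

(* Maps B_X -> B_X are represented by functions on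
   G -> R whose values on B_X lie in B_X (values off B_X are irrelevant). *)
Definition BFPP {G : Type} (X : set (G -> R)) : Prop :=
  forall T : (G -> R) -> (G -> R),
    (forall f, unit_ball X f -> unit_ball X (T f)) ->
    (forall f h, unit_ball X f -> unit_ball X h ->
       supnorm (fun g => T f g - T h g) <= supnorm (fun g => f g - h g)) ->
    exists f, unit_ball X f /\ T f = f.

(* Main.v *)
Require Import Defs.
From HB Require Import structures.
From mathcomp Require Import all_boot all_order all_algebra.
From mathcomp Require Import all_classical all_reals.
From mathcomp Require Import Rstruct.
Import Order.TTheory GRing.Theory Num.Theory.
Local Open Scope classical_set_scope.
Local Open Scope ring_scope.
From mathcomp Require Import lra wochoice.
Lemma card_setU1_inf (T : pointedType) (A : set T) (x : T) :
  infinite_set A -> (A `|` [set x] #= A)%card.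
Proof.
move=> iA.
rewrite card_eq_le; apply/andP; split; last exact/subset_card_le/subsetUl.
have [Ax|nAx] := pselect (A x).
  by apply: subset_card_le => y [//|->].
have /pcard_leP[e] := proj1 (infiniteP A) iA.
have eA n : A (e n) by apply: funS.
have einj m n : e m = e n -> m = n by move=> /(inj (in_setT m) (in_setT n)).
pose f y := match pselect (exists n, y = e n) with
  | left P => match projT1 (cid P) with 0%N => x | n.+1 => e n end
  | right _ => y end.
have fe n : f (e n) = match n with 0%N => x | k.+1 => e k end.
  rewrite /f; case: pselect => [P|]; last by case; exists n.
  by case: (cid P) => m /= /einj ->.
suff -> : A `|` [set x] = f @` A by exact: card_image_le.
apply/seteqP; split => y.
  case=> [Ay|->]; last by exists (e 0%N) => //; rewrite fe.
  have [[n ->]|nE] := pselect (exists n, y = e n).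
    by exists (e n.+1) => //; rewrite fe.
  by exists y => //; rewrite /f; case: pselect.
case=> z Az <-; rewrite /f; case: pselect => [P|_]; last by left.
by case: (cid P) => -[|n] /= _; [right|left].
Qed.

Definition phiS {G : Type} (lt : G -> G -> Prop) (f : G -> R) (a : G) : set R :=
  [set 1] `|` [set `|f b| | b in [set b | lt b a]].

Definition phi {G : Type} (lt : G -> G -> Prop) (f : G -> R) (a : G) : R :=
  inf (phiS lt f a).

Lemma phiS_lb G lt f a : lbound (@phiS G lt f a) 0.
Proof. by move=> y [->//|[b _ <-]]. Qed.

Lemma phi_ge0 G lt f a : 0 <= @phi G lt f a.
Proof. apply: lb_le_inf; [by exists 1; left|exact: phiS_lb]. Qed.

Lemma phi_le1 G lt f a : @phi G lt f a <= 1.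
Proof. by apply: ge_inf; [exists 0; exact: phiS_lb|left]. Qed.

Lemma phi_lelt G lt f a b : lt b a -> @phi G lt f a <= `|f b|.
Proof. by move=> ba; apply: ge_inf; [exists 0; exact: phiS_lb|right; exists b]. Qed.

Lemma phi_lip G lt f h a d : (forall b, `|f b - h b| <= d) ->
  @phi G lt f a <= phi lt h a + d.
Proof.
move=> fh; have d0 : 0 <= d by apply: le_trans (fh a).
rewrite -lerBlDr; apply: lb_le_inf; first by exists 1; left.
move=> y [->|[b ba <-]].
  by rewrite lerBlDr; apply: (le_trans (phi_le1 _ lt f a)); rewrite lerDl.
rewrite lerBlDr; apply: (le_trans (phi_lelt _ _ f a b ba)).
have := ler_normD (h b) (f b - h b); rewrite addrC subrK => H.
by apply: le_trans H _; rewrite lerD2l.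
Qed.

Lemma wo_facts (G : eqType) (r : rel G) : well_order r ->
  (forall x y, r x y \/ r y x) /\
  (forall x y, r x y -> r y x -> x = y) /\
  (forall P : set G, P !=set0 -> exists z, P z /\ forall x, P x -> r z x).
Proof.
move=> wo.
have minP (P : set G) : P !=set0 -> exists z, P z /\ forall x, P x -> r z x.
  move=> [x Px]; have [|z [[zP zlb] _]] := wo [pred y | `[< P y >]].
    by rewrite /nonempty; exists x; rewrite inE.
  exists z; split; first by move: zP; rewrite inE.
  by move=> y Py; apply: zlb; rewrite inE.
split.
  move=> x y; have [|z [zP zlb]] := minP [set w | w = x \/ w = y].
    by exists x; left.
  by case: zP zlb => -> zlb; [left|right]; apply: zlb; [right|left].
have rrefl x : r x x.
  have [|z [[zP zlb] _]] := wo (pred1 x).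
    by rewrite /nonempty; exists x; rewrite inE.
  by move: zP zlb; rewrite inE => /eqP -> ->//; rewrite inE.
split=> // x y xy yx.
have [|z [[zP zlb] zu]] := wo [pred w | (w == x) || (w == y)].
  by rewrite /nonempty; exists x; rewrite inE eqxx.
have mx : minimum_of r [pred w | (w == x) || (w == y)] x.
  split; first by rewrite inE eqxx.
  by move=> w; rewrite inE => /orP[/eqP->|/eqP->].
have my : minimum_of r [pred w | (w == x) || (w == y)] y.
  split; first by rewrite inE eqxx orbT.
  by move=> w; rewrite inE => /orP[/eqP->|/eqP->].
by rewrite -(zu _ mx) -(zu _ my).
Qed.

Theorem mainTheorem9 (K G : Type) :
  infinite_set [set: K] ->
  ([set: K] #<= [set: G])%card ->
  ~ ([set: G] #<= [set: K])%card ->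
  ~ BFPP (X0 K G).
Proof.
elim/Ppointed: G => G iK KG GK; first by move=> _; apply: GK; exact: card_le_emptyl.
have [r wor] := well_ordering_principle G.
have [rtot [ranti rmin]] := wo_facts _ _ wor.
pose lt b a := r b a /\ b <> a.
have notcover (A : set G) : (A #= [set: K])%card -> exists g, ~ A g.
  move=> AK; apply: contrapT => ncov; apply: GK.
  apply: (card_le_trans (B := A)).
    by apply: subset_card_le => g _; apply: contrapT => nAg; apply: ncov; exists g.
  by move: AK; rewrite card_eq_le => /andP[].
move=> bfpp.
have ball : forall f, unit_ball (X0 K G) f -> unit_ball (X0 K G) (phi lt f).
  move=> f [[fb [A [AK Af]]] fn].
  split; last first.
    apply: ge_sup; first by exists `|phi lt f point|; exists point.
    by move=> y [g _ <-]; rewrite ger0_norm ?phi_ge0 ?phi_le1.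
  split; first by exists 1 => g; rewrite ger0_norm ?phi_ge0 ?phi_le1.
  have [b0 [nAb0 b0min]] := rmin [set g | ~ A g] (notcover A AK).
  exists (A `|` [set b0]); split.
    apply: (@card_eq_trans _ _ _ _ A _ _ AK); apply: card_setU1_inf.
    by rewrite (eq_finite_set AK).
  move=> g; move/not_orP => [nAg ngb0].
  apply/le_anti/andP; split; last exact: phi_ge0.
  have lb : lt b0 g by split; [exact: b0min | move=> e; apply: ngb0; rewrite e].
  by apply: (le_trans (phi_lelt _ _ f g b0 lb)); rewrite Af // normr0.
have nonexp : forall f h, unit_ball (X0 K G) f -> unit_ball (X0 K G) h ->
    supnorm (fun g => phi lt f g - phi lt h g) <= supnorm (fun g => f g - h g).
  move=> f h [[[Mf fM] _] _] [[[Mh hM] _] _].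
  set d := supnorm (fun g => f g - h g).
  have fhd b : `|f b - h b| <= d.
    apply: ub_le_sup; last by exists b.
    exists (Mf + Mh) => y [g _ <-].
    by apply: (le_trans (ler_normB _ _)); apply: lerD.
  apply: ge_sup; first by exists `|phi lt f point - phi lt h point|; exists point.
  move=> y [g _ <-].
  have h1 := phi_lip _ lt f h g d fhd.
  have h2 : phi lt h g <= phi lt f g + d.
    by apply: phi_lip => b; rewrite distrC.
  rewrite ler_norml; apply/andP; split; lra.
have [f [[[_ [A [AK Af]]] _] ffix]] := bfpp _ ball nonexp.
have fg g : f g = phi lt f g by rewrite ffix.
have f1 : forall g, f g = 1.
  apply: contrapT => /existsNP P.
  have [z [zP zmin]] := rmin [set g | f g <> 1] P.
  apply: zP; rewrite fg; apply/le_anti/andP; split; first exact: phi_le1.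
  apply: lb_le_inf; first by exists 1; left.
  move=> y [->//|[b [rbz nbz] <-]].
  have -> : f b = 1.
    apply: contrapT => fb1; apply: nbz; apply: ranti rbz (zmin _ fb1).
  by rewrite normr1.
have [g nAg] := notcover A AK.
by have := f1 g; rewrite Af // => /eqP; rewrite eq_sym oner_eq0.
Qed.
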